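(* Let $\mathbf I\subset\mathbb R$ be a bounded interval, $\sigma\in(0,1]$, and $\mathcal Q$ a collection of real-valued measurable functions on $\mathbf I$. Let $L:L^2(\mathbf I)\to\mathbb C$ be a bounded sub-linear functional, let $\mathbf S_\sigma$ be the set of all $f\in L^2(\mathbf I)$ that are $\sigma$-uniform in $\mathcal Q$, and set $$U_\sigma=\sup_{f\in\mathbf S_\sigma,\,f\ne0}\frac{|L(f)|}{\|f\|_{L^2(\mathbf I)}},\qquad Q=\sup_{q\in\mathcal Q}|L(e^{iq})|.$$ Then for all $f\in L^2(\mathbf I)$, $$|L(f)|\le\max\{U_\sigma,\,2\sigma^{-1}Q\}\,\|f\|_{L^2(\mathbf I)}.$$
   Context: A function $f\in L^2(\mathbf I)$ is $\sigma$-uniform in $\mathcal Q$ if $\big|\int_{\mathbf I}f(\xi)e^{-iq(\xi)}d\xi\big|\le\sigma\|f\|_{L^2(\mathbf I)}$ for all $q\in\mathcal Q$; otherwise it is $\sigma$-nonuniform. Sub-linear means $|L(f+g)|\le|L(f)|+|L(g)|$ and $|L(cf)|=|c||L(f)|$ for all $f,g\in L^2(\mathbf I)$, $c\in\mathbb C$; bounded means $|L(f)|\le A\|f\|_{L^2(\mathbf I)}$ for some $A<\infty$. Here $e^{iq}$ denotes the function $\xi\mapsto e^{iq(\xi)}$ on $\mathbf I$. *)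

(* Defs.v *)
From mathcomp Require Import all_boot all_order all_algebra.
From mathcomp Require Import all_classical all_reals all_analysis.
From mathcomp Require Export complex.
Set Implicit Arguments. Unset Strict Implicit. Unset Printing Implicit Defensive.
Import Order.TTheory GRing.Theory Num.Theory.
Local Open Scope classical_set_scope.
Local Open Scope ring_scope.

Section Defs.
Variable R : realType.

Definition cmod (z : R[i]) : R := Num.sqrt (complex.Re z ^+ 2 + complex.Im z ^+ 2).

(* the bounded interval with endpoints a, b; the booleans choose whether each
   endpoint is included: a <= x (ba = true) or a < x (ba = false);
   x < b (bb = true) or x <= b (bb = false) *)
Definition bint (a b : R) (ba bb : bool) : set R :=
  [set` Interval (BSide ba a) (BSide bb b)].

Definition cmeasurable (I : set R) (f : R -> R[i]) : Prop :=
  measurable_fun I (fun x => complex.Re (f x)) /\ measurable_fun I (fun x => complex.Im (f x)).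

Definition L2 (I : set R) (f : R -> R[i]) : Prop :=
  cmeasurable I f /\
  (\int[lebesgue_measure]_(x in I) ((cmod (f x)) ^+ 2)%:E < +oo)%E.

Definition L2norm (I : set R) (f : R -> R[i]) : R :=
  Num.sqrt (\int[lebesgue_measure]_(x in I) ((cmod (f x)) ^+ 2)).

Definition cintegral (I : set R) (g : R -> R[i]) : R[i] :=
  Complex (\int[lebesgue_measure]_(x in I) complex.Re (g x))
          (\int[lebesgue_measure]_(x in I) complex.Im (g x)).

Definition cexpi (q : R -> R) : R -> R[i] :=
  fun x => Complex (cos (q x)) (sin (q x)).

Definition sigma_uniform (I : set R) (Q : set (R -> R)) (sigma : R)
    (f : R -> R[i]) : Prop :=
  forall q, Q q ->
    cmod (cintegral I (fun x => f x * cexpi (fun y => - q y) x))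
      <= sigma * L2norm I f.

Definition sublinear (I : set R) (L : (R -> R[i]) -> R[i]) : Prop :=
  (forall f g, L2 I f -> L2 I g ->
     cmod (L (fun x => f x + g x)) <= cmod (L f) + cmod (L g)) /\
  (forall (c : R[i]) f, L2 I f ->
     cmod (L (fun x => c * f x)) = cmod c * cmod (L f)).

Definition bounded_functional (I : set R) (L : (R -> R[i]) -> R[i]) : Prop :=
  exists A : R, forall f, L2 I f -> cmod (L f) <= A * L2norm I f.

Definition Usigma (I : set R) (Q : set (R -> R)) (sigma : R)
    (L : (R -> R[i]) -> R[i]) : \bar R :=
  ereal_sup [set (cmod (L f) / L2norm I f)%:E | f in
    [set f | L2 I f /\ sigma_uniform I Q sigma f /\ L2norm I f != 0]].

Definition Qsup (Q : set (R -> R)) (L : (R -> R[i]) -> R[i]) : \bar R :=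
  ereal_sup [set (cmod (L (cexpi q)))%:E | q in Q].

End Defs.

(* Main.v *)
Require Import Defs.
From mathcomp Require Import all_boot all_order all_algebra.
From mathcomp Require Import all_classical all_reals all_analysis.
From mathcomp Require Import complex measurable_realfun ring lra.
Import Order.TTheory GRing.Theory Num.Theory.
Local Open Scope classical_set_scope.
Local Open Scope ring_scope.

Lemma arith (R : realType) (N m M k s j G Lf : R) :
  0 < N -> 0 < m -> 0 < s -> k < M -> 0 <= k -> s * N < j -> 0 <= G ->
  G ^+ 2 = N ^+ 2 - j ^+ 2 / m ->
  Lf <= j / m * (k * s / 2) + M * G ->
  Lf <= (M - s ^+ 2 * (M - k) / (2 * m)) * N.
Proof.
move=> N0 m0 s0 kM k0 jN G0 GE LE.
set u := j / m.
have hj : j = u * m by rewrite /u divfK // gt_eqF.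
have u0 : 0 < u by rewrite /u divr_gt0 //; nra.
have GE2 : G ^+ 2 = N ^+ 2 - u ^+ 2 * m.
  by rewrite GE hj; field; rewrite gt_eqF.
set X := N - u ^+ 2 * m / (2 * N).
have hX : X * (2 * N) = 2 * N ^+ 2 - u ^+ 2 * m.
  by rewrite /X; field; rewrite gt_eqF.
have X0 : 0 <= X.
  have : 0 <= X * (2 * N) by rewrite hX; nra.
  by rewrite pmulr_lge0 //; nra.
have GX : G <= X.
  have : (G * (2 * N)) ^+ 2 <= (X * (2 * N)) ^+ 2.
    rewrite hX exprMn GE2; have := sqr_ge0 (u ^+ 2 * m); nra.
  move=> h.
  have : G * (2 * N) <= X * (2 * N).
    have a0 : 0 <= G * (2 * N) by nra.
    have b0 : 0 <= X * (2 * N) by nra.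
    nra.
  by rewrite ler_pM2r //; nra.
have h1 : M * G <= M * X by apply: ler_wpM2l => //; nra.
have hw : u ^+ 2 * m / (2 * N) * (2 * N) = u ^+ 2 * m.
  by rewrite divfK // mulf_neq0 ?gt_eqF.
have h2 : u * s / 2 <= u ^+ 2 * m / (2 * N).
  have : u * s / 2 * (2 * N) <= u ^+ 2 * m / (2 * N) * (2 * N).
    have -> : u * s / 2 * (2 * N) = u * s * N by field.
    by rewrite hw; nra.
  by rewrite ler_pM2r //; nra.
have hsu : s * N / m < u.
  by rewrite ltr_pdivrMr // -hj.
have hd : s ^+ 2 * (M - k) / (2 * m) * N = s * N / m * (s * (M - k) / 2).
  by field; rewrite gt_eqF.
rewrite mulrBl hd.
have h3 : s * N / m * (s * (M - k) / 2) <= u * (s * (M - k) / 2).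
  apply: ler_wpM2r; last exact: ltW.
  by apply: divr_ge0 => //; nra.
have : Lf <= u * (k * s / 2) + M * N - M * (u ^+ 2 * m / (2 * N)).
  by rewrite /X mulrBr in h1; rewrite -/u in LE; lra.
have h4 : M * (u * s / 2) <= M * (u ^+ 2 * m / (2 * N)).
  by apply: ler_wpM2l => //; lra.
have h5 : u * (k * s / 2) - M * (u * s / 2) = - (u * (s * (M - k) / 2)) by field.
lra.
Qed.

Local Notation cRe := complex.Re.
Local Notation cIm := complex.Im.
Section S.
Variable R : realType.
Notation mu := (@lebesgue_measure R).
Variable I : set R.
Hypothesis mI : measurable (I : set (measurableTypeR R)).
Hypothesis finI : (mu I < +oo)%E.

Local Notation intg h := (mu.-integrable I (EFin \o h)).

Lemma intg_cst k : intg (fun _ => k).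
Proof.
apply/integrableP; split; first exact/measurable_EFinP/measurable_cst.
rewrite /= integral_cst//= lte_mul_pinfty//.
Qed.

Lemma intgD {f g : R -> R} : intg f -> intg g -> intg (fun x => f x + g x).
Proof. by move=> hf hg; apply: (eq_integrable mI _ _ _ (integrableD mI hf hg)) => x _ /=; rewrite EFinD. Qed.

Lemma intgN {f : R -> R} : intg f -> intg (fun x => - f x).
Proof. move=> hf; apply: (eq_integrable mI _ _ _ (integrableN hf)) => x _ /=; by rewrite EFinN. Qed.

Lemma intgZ r {f : R -> R} : intg f -> intg (fun x => r * f x).
Proof. move=> hf; apply: (eq_integrable mI _ _ _ (integrableZl mI r hf)) => x _ /=; by rewrite EFinM. Qed.

Lemma intg_dom (f g : R -> R) : measurable_fun I f -> (forall x, I x -> `|f x| <= g x) ->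
  intg g -> intg f.
Proof.
move=> mf fg hg; apply: (le_integrable mI _ _ hg).
  exact/measurable_EFinP.
move=> x Ix /=; rewrite lee_fin; apply: (le_trans (fg x Ix)); exact: ler_norm.
Qed.

Lemma mfun_intg (f : R -> R) : intg f -> measurable_fun I f.
Proof. by case/integrableP => /measurable_EFinP. Qed.

Lemma intg_finite (f : R -> R) : intg f -> (forall x, I x -> 0 <= f x) ->
  (\int[mu]_(x in I) (f x)%:E < +oo)%E.
Proof.
case/integrableP => _ H f0.
suff -> : (\int[mu]_(x in I) (f x)%:E = \int[mu]_(x in I) `|(f x)%:E|)%E by exact: H.
apply: eq_integral => x /[!inE] Ix; by rewrite gee0_abs // lee_fin f0.
Qed.

Lemma finite_intg (f : R -> R) : measurable_fun I f -> (forall x, I x -> 0 <= f x) ->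
  (\int[mu]_(x in I) (f x)%:E < +oo)%E -> intg f.
Proof.
move=> mf f0 H; apply/integrableP; split; first exact/measurable_EFinP.
suff <- : (\int[mu]_(x in I) (f x)%:E = \int[mu]_(x in I) `|(EFin \o f) x|)%E by [].
apply: eq_integral => x /[!inE] Ix; by rewrite gee0_abs // lee_fin f0.
Qed.

Lemma mcos (q : R -> R) : measurable_fun I q -> measurable_fun I (fun x => cos (q x)).
Proof.
move=> mq; apply: (measurableT_comp (f := cos)) => //.
apply: continuous_measurable_fun; exact: continuous_cos.
Qed.

Lemma msin (q : R -> R) : measurable_fun I q -> measurable_fun I (fun x => sin (q x)).
Proof.
move=> mq; apply: (measurableT_comp (f := sin)) => //.
apply: continuous_measurable_fun; exact: continuous_sin.
Qed.


Lemma cmod_sq (z : R[i]) : cmod z ^+ 2 = cRe z ^+ 2 + cIm z ^+ 2.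
Proof. by rewrite /cmod sqr_sqrtr // addr_ge0 // sqr_ge0. Qed.

Lemma ReM (z w : R[i]) : cRe (z * w) = cRe z * cRe w - cIm z * cIm w.
Proof. by case: z => a b; case: w => c d. Qed.
Lemma ImM (z w : R[i]) : cIm (z * w) = cRe z * cIm w + cIm z * cRe w.
Proof. by case: z => a b; case: w => c d. Qed.
Lemma ReB (z w : R[i]) : cRe (z - w) = cRe z - cRe w.
Proof. by case: z => a b; case: w => c d. Qed.
Lemma ImB (z w : R[i]) : cIm (z - w) = cIm z - cIm w.
Proof. by case: z => a b; case: w => c d. Qed.


Lemma L2_of (h : R -> R[i]) (E : R -> R) :
  measurable_fun I (fun x => cRe (h x)) -> measurable_fun I (fun x => cIm (h x)) ->
  intg E -> (forall x, cmod (h x) ^+ 2 = E x) -> L2 I h.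
Proof.
move=> m1 m2 iE hE; split; first by split.
have -> : (fun x => (cmod (h x) ^+ 2)%:E) = (fun x => (E x)%:E).
  by apply/funext => x; rewrite hE.
apply: intg_finite => // x _; rewrite -hE; exact: sqr_ge0.
Qed.


Lemma mD (f g : R -> R) : measurable_fun I f -> measurable_fun I g ->
  measurable_fun I (fun x => f x + g x).
Proof. exact: measurable_funD. Qed.
Lemma mB (f g : R -> R) : measurable_fun I f -> measurable_fun I g ->
  measurable_fun I (fun x => f x - g x).
Proof. exact: measurable_funB. Qed.
Lemma mM (f g : R -> R) : measurable_fun I f -> measurable_fun I g ->
  measurable_fun I (fun x => f x * g x).
Proof. exact: measurable_funM. Qed.
Lemma mK (k : R) : measurable_fun I (fun _ : R => k).
Proof. exact: measurable_cst. Qed.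

Section F.
Variable f : R -> R[i].
Hypothesis hf : L2 I f.
Variable q : R -> R.
Hypothesis mq : measurable_fun I q.

Let fr x := cRe (f x).
Let fi x := cIm (f x).
Let C x := cos (q x).
Let S x := sin (q x).
Let nf x := fr x ^+ 2 + fi x ^+ 2.
Let A x := fr x * C x + fi x * S x.
Let B x := fi x * C x - fr x * S x.

Lemma mfr : measurable_fun I fr. Proof. by case: hf => [[]]. Qed.
Lemma mfi : measurable_fun I fi. Proof. by case: hf => [[]]. Qed.
Lemma mC : measurable_fun I C. Proof. exact: mcos. Qed.
Lemma mS : measurable_fun I S. Proof. exact: msin. Qed.

Lemma intg_nf : intg nf.
Proof.
apply: finite_intg.
- by apply: mD; apply: measurable_funX; [exact: mfr|exact: mfi].
- by move=> x _; rewrite addr_ge0 // sqr_ge0.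
case: hf => _; congr (_ < _)%E; apply: eq_integral => x _.
by rewrite cmod_sq.
Qed.

Lemma norm_le_sq (h : R) : `|h| <= 1 + h ^+ 2.
Proof.
rewrite -real_normK ?num_real //; set n := `|h|.
have : 0 <= n by apply: normr_ge0.
nra.
Qed.

Lemma intg_prod (h t : R -> R) : measurable_fun I h -> measurable_fun I t ->
  (forall x, `|t x| <= 1) -> (forall x, h x ^+ 2 <= nf x) ->
  intg (fun x => h x * t x).
Proof.
move=> mh mt t1 hn; apply: (@intg_dom _ (fun x => 1 + nf x)).
- exact: mM.
- move=> x _; rewrite normrM.
  apply: (le_trans (y := `|h x|)).
    by rewrite -[leRHS]mulr1 ler_wpM2l.
  by apply: (le_trans (norm_le_sq (h x))); rewrite lerD2l.
by apply: intgD; [exact: intg_cst|exact: intg_nf].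
Qed.

Lemma fr_nf x : fr x ^+ 2 <= nf x.
Proof. by rewrite /nf lerDl sqr_ge0. Qed.
Lemma fi_nf x : fi x ^+ 2 <= nf x.
Proof. by rewrite /nf lerDr sqr_ge0. Qed.
Lemma C1 x : `|C x| <= 1. Proof. exact: cos_max. Qed.
Lemma S1 x : `|S x| <= 1. Proof. exact: sin_max. Qed.

Lemma intg_A : intg A.
Proof.
apply: intgD; apply: intg_prod;
  by [exact: mfr|exact: mfi|exact: mC|exact: mS|exact: C1|exact: S1|exact: fr_nf|exact: fi_nf].
Qed.

Lemma intg_B : intg B.
Proof.
rewrite /B; apply: intgD; first apply: intg_prod;
  try by [exact: mfr|exact: mfi|exact: mC|exact: mS|exact: C1|exact: S1|exact: fr_nf|exact: fi_nf].
apply: intgN; apply: intg_prod;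
  by [exact: mfr|exact: mfi|exact: mC|exact: mS|exact: C1|exact: S1|exact: fr_nf|exact: fi_nf].
Qed.

Let m := fine (mu I).
Let J := cintegral I (fun x => f x * cexpi (fun y => - q y) x).

Lemma ReJ : cRe J = \int[mu]_(x in I) A x.
Proof.
rewrite /J /cintegral /=; apply: eq_Rintegral => x _.
by rewrite ReM /cexpi /= cosN sinN /A /fr /fi /C /S; ring.
Qed.

Lemma ImJ : cIm J = \int[mu]_(x in I) B x.
Proof.
rewrite /J /cintegral /=; apply: eq_Rintegral => x _.
by rewrite ImM /cexpi /= cosN sinN /B /fr /fi /C /S; ring.
Qed.

Lemma g_Re (c : R[i]) x :
  cRe (f x - c * cexpi q x) = fr x - (cRe c * C x - cIm c * S x).
Proof. by rewrite ReB ReM. Qed.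
Lemma g_Im (c : R[i]) x :
  cIm (f x - c * cexpi q x) = fi x - (cRe c * S x + cIm c * C x).
Proof. by rewrite ImB ImM. Qed.

Lemma CS x : C x ^+ 2 + S x ^+ 2 = 1.
Proof. exact: cos2Dsin2. Qed.

Lemma g_sq (c : R[i]) x : cmod (f x - c * cexpi q x) ^+ 2 =
  nf x + (cRe c ^+ 2 + cIm c ^+ 2) - 2 * (cRe c * A x + cIm c * B x).
Proof.
rewrite cmod_sq g_Re g_Im /nf /A /B.
have h := CS x.
have -> : (fr x - (cRe c * C x - cIm c * S x)) ^+ 2 +
  (fi x - (cRe c * S x + cIm c * C x)) ^+ 2 =
  fr x ^+ 2 + fi x ^+ 2 + (cRe c ^+ 2 + cIm c ^+ 2) * (C x ^+ 2 + S x ^+ 2) -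
  2 * (cRe c * (fr x * C x + fi x * S x) + cIm c * (fi x * C x - fr x * S x)) by ring.
by rewrite h mulr1.
Qed.

Lemma ce_sq (c : R[i]) x : cmod (c * cexpi q x) ^+ 2 = cRe c ^+ 2 + cIm c ^+ 2.
Proof.
rewrite cmod_sq ReM ImM /cexpi /=.
have h := CS x; rewrite /C /S in h.
have -> : (cRe c * cos (q x) - cIm c * sin (q x)) ^+ 2 +
  (cRe c * sin (q x) + cIm c * cos (q x)) ^+ 2 =
  (cRe c ^+ 2 + cIm c ^+ 2) * (cos (q x) ^+ 2 + sin (q x) ^+ 2) by ring.
by rewrite h mulr1.
Qed.

Lemma intg_E (c : R[i]) : intg (fun x =>
  nf x + (cRe c ^+ 2 + cIm c ^+ 2) - 2 * (cRe c * A x + cIm c * B x)).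
Proof.
apply: intgD; first exact: (intgD intg_nf (intg_cst _)).
apply: intgN; apply: intgZ; apply: intgD; apply: intgZ.
  exact: intg_A.
exact: intg_B.
Qed.

Lemma L2_g (c : R[i]) : L2 I (fun x => f x - c * cexpi q x).
Proof.
apply: (@L2_of _ (fun x =>
  nf x + (cRe c ^+ 2 + cIm c ^+ 2) - 2 * (cRe c * A x + cIm c * B x))).
- rewrite (_ : (fun x => _) = (fun x => fr x - (cRe c * C x - cIm c * S x))).
    apply: mB; first exact: mfr.
    by apply: mB; apply: mM; (exact: mK || exact: mC || exact: mS).
  by apply/funext => x; rewrite g_Re.
- rewrite (_ : (fun x => _) = (fun x => fi x - (cRe c * S x + cIm c * C x))).
    apply: mB; first exact: mfi.
    by apply: mD; apply: mM; (exact: mK || exact: mC || exact: mS).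
  by apply/funext => x; rewrite g_Im.
- exact: intg_E.
- exact: g_sq.
Qed.

Lemma L2_ce (c : R[i]) : L2 I (fun x => c * cexpi q x).
Proof.
apply: (@L2_of _ (fun _ => cRe c ^+ 2 + cIm c ^+ 2)).
- rewrite (_ : (fun x => _) = (fun x => cRe c * C x - cIm c * S x)).
    by apply: mB; apply: mM; (exact: mK || exact: mC || exact: mS).
  by apply/funext => x; rewrite ReM.
- rewrite (_ : (fun x => _) = (fun x => cRe c * S x + cIm c * C x)).
    by apply: mD; apply: mM; (exact: mK || exact: mC || exact: mS).
  by apply/funext => x; rewrite ImM.
- exact: intg_cst.
- exact: ce_sq.
Qed.

Lemma L2_e : L2 I (cexpi q).
Proof.
apply: (@L2_of _ (fun _ => 1)).
- exact: mC.
- exact: mS.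
- exact: intg_cst.
- by move=> x; rewrite cmod_sq /cexpi /= cos2Dsin2.
Qed.

Lemma L2norm_sq (h : R -> R[i]) :
  L2norm I h ^+ 2 = \int[mu]_(x in I) (cmod (h x) ^+ 2).
Proof. by rewrite /L2norm sqr_sqrtr // Rintegral_ge0 // => x _; exact: sqr_ge0. Qed.

Lemma normg (c : R[i]) : L2norm I (fun x => f x - c * cexpi q x) ^+ 2 =
  L2norm I f ^+ 2 + (cRe c ^+ 2 + cIm c ^+ 2) * m - 2 * (cRe c * cRe J + cIm c * cIm J).
Proof.
rewrite !L2norm_sq; under eq_Rintegral do rewrite g_sq.
set K := cRe c ^+ 2 + cIm c ^+ 2.
rewrite (@RintegralB _ _ _ mu I (fun x => nf x + K)
   (fun x => 2 * (cRe c * A x + cIm c * B x))) //; last 2 first.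
- exact: (intgD intg_nf (intg_cst _)).
- by apply: intgZ; apply: intgD; apply: intgZ; [exact: intg_A|exact: intg_B].
rewrite (@RintegralD _ _ _ mu I nf (fun _ => K)) //; last 2 first.
- exact: intg_nf.
- exact: intg_cst.
rewrite (@RintegralZl _ _ _ mu I (fun x => cRe c * A x + cIm c * B x)) //; last first.
- by apply: intgD; apply: intgZ; [exact: intg_A|exact: intg_B].
rewrite (@RintegralD _ _ _ mu I (fun x => cRe c * A x) (fun x => cIm c * B x)) //; last 2 first.
- exact: (intgZ _ intg_A).
- exact: (intgZ _ intg_B).
rewrite (@RintegralZl _ _ _ mu I A) //; last exact: intg_A.
rewrite (@RintegralZl _ _ _ mu I B) //; last exact: intg_B.
rewrite Rintegral_cst // ReJ ImJ; congr (_ + _ - _).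
by apply: eq_Rintegral => x _; rewrite cmod_sq.
Qed.

End F.

Lemma L2norm_ge0 (h : R -> R[i]) : 0 <= L2norm I h.
Proof. exact: sqrtr_ge0. Qed.
Lemma cmod_ge0 (z : R[i]) : 0 <= cmod z.
Proof. exact: sqrtr_ge0. Qed.

Lemma main (Q : set (R -> R)) (L : (R -> R[i]) -> R[i]) (s k : R) :
  0 < s -> 0 <= k ->
  (forall q, Q q -> measurable_fun I q) ->
  sublinear I L -> bounded_functional I L ->
  (forall f, L2 I f -> sigma_uniform I Q s f -> cmod (L f) <= k * L2norm I f) ->
  (forall q, Q q -> cmod (L (cexpi q)) <= k * s / 2) ->
  forall f, L2 I f -> cmod (L f) <= k * L2norm I f.
Proof.
move=> s0 k0 hQ [Ladd Lmul] [A hA] Hu HQ.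
pose Sset := [set r : R | r = 0 \/ exists f, L2 I f /\ 0 < L2norm I f /\
   r = cmod (L f) / L2norm I f].
have ubS : ubound Sset `|A|.
  move=> r [->|[f [hf [N0 ->]]]]; first exact: normr_ge0.
  rewrite ler_pdivrMr //; apply: (le_trans (hA f hf)).
  by apply: ler_wpM2r; [exact: ltW|exact: ler_norm].
have neS : Sset !=set0 by exists 0; left.
have hasub : has_ubound Sset by exists `|A|.
set M := sup Sset.
have M0 : 0 <= M by apply: (ub_le_sup hasub); left.
have hM : forall f, L2 I f -> cmod (L f) <= M * L2norm I f.
  move=> f hf; have [N0|N0] := ltrP 0 (L2norm I f).
    rewrite -ler_pdivrMr //; apply: (ub_le_sup hasub); right; by exists f.
  have N00 : L2norm I f = 0 by apply/le_anti; rewrite N0 L2norm_ge0.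
  by have := hA f hf; rewrite N00 !mulr0.
have [Mk|kM] := leP M k.
  move=> f hf; apply: (le_trans (hM f hf)).
  by rewrite ler_wpM2r // L2norm_ge0.
exfalso.
have nonu : forall f, L2 I f -> ~ sigma_uniform I Q s f -> exists q, Q q /\
    s * L2norm I f < cmod (cintegral I (fun x => f x * cexpi (fun y => - q y) x)).
  move=> f hf hnu; case: (pselect (exists q, Q q /\
    s * L2norm I f < cmod (cintegral I (fun x => f x * cexpi (fun y => - q y) x)))) => // hn.
  exfalso; apply: hnu => q Qq; rewrite leNgt; apply/negP => h; apply: hn; by exists q.
set m := fine (mu I).
have m0 : 0 <= m by apply: fine_ge0; exact: measure_ge0.
have [mpos|m00] : 0 < m \/ m = 0.
    by move: m0; rewrite le_eqVlt => /orP[/eqP<-|->]; [right|left].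
  pose d := s ^+ 2 * (M - k) / (2 * m).
  have d0 : 0 < d.
    rewrite /d divr_gt0 ?mulr_gt0 ?exprn_gt0 // subr_gt0 //.
  pose M' := Num.max k (M - d).
  have claim : forall f, L2 I f -> 0 < L2norm I f -> cmod (L f) <= M' * L2norm I f.
    move=> f hf N0; case: (pselect (sigma_uniform I Q s f)) => hu.
      apply: (le_trans (Hu f hf hu)); apply: ler_wpM2r; first exact: ltW.
      by rewrite le_max lexx.
    have [q [Qq hq]] := nonu f hf hu.
    have mq := hQ q Qq.
    set J := cintegral _ _ in hq.
    set N := L2norm I f in N0 hq *.
    have hj : cmod J ^+ 2 = cRe J ^+ 2 + cIm J ^+ 2 by rewrite cmod_sq.
    pose c := Complex (cRe J / m) (cIm J / m).
    pose g := fun x => f x - c * cexpi q x.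
    have Lfe : L f = L (fun x => c * cexpi q x + g x).
      by congr L; apply/funext => x; rewrite /g addrC subrK.
    have hcc : cmod c = cmod J / m.
      rewrite [cmod c]/cmod (_ : cRe c ^+ 2 + cIm c ^+ 2 = (cmod J / m) ^+ 2).
        by rewrite sqrtr_sqr ger0_norm // divr_ge0 // cmod_ge0.
      rewrite (_ : cRe c = cRe J / m) // (_ : cIm c = cIm J / m) //.
      by rewrite !expr_div_n hj; field; rewrite gt_eqF.
    have hG := normg f hf q mq c.
    rewrite -/m -/N -/J in hG. rewrite (_ : cRe c = cRe J / m) // (_ : cIm c = cIm J / m) // in hG.
    have GE : L2norm I g ^+ 2 = N ^+ 2 - cmod J ^+ 2 / m.
      by rewrite /g hG hj; move: (cRe J) (cIm J) => a b; field; rewrite gt_eqF.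
    have LE : cmod (L f) <= cmod J / m * (k * s / 2) + M * L2norm I g.
      rewrite Lfe; apply: (le_trans (Ladd _ _ (L2_ce q mq c) (L2_g f hf q mq c))).
      rewrite Lmul; last exact: L2_e.
      apply: lerD.
        by rewrite hcc; apply: ler_wpM2l; [rewrite divr_ge0 // cmod_ge0|exact: HQ].
      exact: hM (L2_g f hf q mq c).
    have := arith _ _ _ _ _ _ _ _ _ N0 mpos s0 kM k0 hq (L2norm_ge0 g) GE LE.
    move=> h; apply: (le_trans h); apply: ler_wpM2r; first exact: ltW.
    by rewrite le_max lexx orbT.
  have : M <= M'.
    apply: ge_sup => // r [->|[f [hf [N0 ->]]]].
      by rewrite le_max k0.
    by rewrite ler_pdivrMr // claim.
  rewrite leNgt => /negP; apply.
  by rewrite gt_max kM /= gtrBl.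
(* m = 0 : everything uniform *)
have allu : forall f, L2 I f -> 0 < L2norm I f -> sigma_uniform I Q s f.
  move=> f hf N0; case: (pselect (sigma_uniform I Q s f)) => // hnu.
  have [q [Qq hq]] := nonu f hf hnu.
  set J := cintegral _ _ in hq.
  set N := L2norm I f in N0 hq.
  have j0 : 0 < cmod J by apply: le_lt_trans hq; rewrite mulr_ge0 // ltW.
  have hj : cmod J ^+ 2 = cRe J ^+ 2 + cIm J ^+ 2 by rewrite cmod_sq.
  set t := (N ^+ 2 + 1) / cmod J ^+ 2.
  have := normg f hf q (hQ q Qq) (Complex (t * cRe J) (t * cIm J)).
  rewrite -/m m00 mulr0 addr0 /= -/N -/J => hG.
  have : 0 <= N ^+ 2 - 2 * (t * cRe J * cRe J + t * cIm J * cIm J).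
    by rewrite -hG sqr_ge0.
  have -> : t * cRe J * cRe J + t * cIm J * cIm J = N ^+ 2 + 1.
    have -> : t * cRe J * cRe J + t * cIm J * cIm J = t * cmod J ^+ 2.
      by rewrite hj; ring.
    by rewrite /t divfK // expf_neq0 // gt_eqF.
  nra.
have : M <= k.
  apply: ge_sup => // r [->//|[f [hf [N0 ->]]]].
  by rewrite ler_pdivrMr //; apply: Hu => //; exact: allu.
by rewrite leNgt kM.
Qed.

End S.

Theorem theorem7p2 (R : realType) (a b : R) (ba bb : bool) (sigma : R)
    (Q : set (R -> R)) (L : (R -> R[i]) -> R[i]) :
  0 < sigma <= 1 ->
  (forall q, Q q -> measurable_fun (bint a b ba bb) q) ->
  sublinear (bint a b ba bb) L ->
  bounded_functional (bint a b ba bb) L ->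
  forall f, L2 (bint a b ba bb) f ->
  ((cmod (L f))%:E <=
     maxe (Usigma (bint a b ba bb) Q sigma L) ((2 / sigma)%:E * Qsup Q L)
       * (L2norm (bint a b ba bb) f)%:E)%E.
Proof.
move=> /andP[s0 s1] hQ hsub hbd f hf.
have mI : measurable (bint a b ba bb : set (measurableTypeR R)) by exact: measurable_itv.
have finI : (lebesgue_measure (bint a b ba bb) < +oo)%E.
  rewrite /bint lebesgue_measure_itv; case: ifP => _ /=; last exact: ltry.
  by rewrite -EFinD ltry.
set I := bint a b ba bb in mI finI hQ hsub hbd hf *.
have [A hA] := hbd.
have N0 := @L2norm_ge0 R I f.
set N := L2norm I f in N0 *.
set U := Usigma I Q sigma L.
set X := ((2 / sigma)%:E * Qsup Q L)%E.
have zero : forall g, L2 I g -> L2norm I g = 0 -> cmod (L g) = 0.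
  move=> g hg g0; apply/le_anti; rewrite cmod_ge0 andbT.
  by have := hA g hg; rewrite g0 mulr0.
have [N00|Npos] := eqVneq N 0.
  by rewrite N00 mule0 zero.
have Npos' : 0 < N by rewrite lt_def Npos N0.
have Uub : forall g, L2 I g -> sigma_uniform I Q sigma g -> L2norm I g != 0 ->
    ((cmod (L g) / L2norm I g)%:E <= U)%E.
  move=> g hg hu hn; apply: ereal_sup_ubound; exists g => //.
have Qub : forall q, Q q -> ((cmod (L (cexpi q)))%:E <= Qsup Q L)%E.
  move=> q Qq; apply: ereal_sup_ubound; exists q => //.
have UK : (U <= maxe U X)%E by rewrite le_max lexx.
have XK : (X <= maxe U X)%E by rewrite le_max lexx orbT.
have Xge0 : forall q, Q q -> (0 <= X)%E.
  move=> q Qq; rewrite /X mule_ge0 //; first by rewrite lee_fin divr_ge0 // ltW.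
  by apply: le_trans (Qub q Qq); rewrite lee_fin cmod_ge0.
case: (pselect (sigma_uniform I Q sigma f)) => hu.
  have := le_trans (Uub f hf hu Npos) UK.
  case: (maxe U X) => [k| |] hle.
  - by rewrite lee_fin ler_pdivrMr // in hle; rewrite -EFinM lee_fin.
  - by rewrite gt0_mulye ?lte_fin // leey.
  - by move: hle; rewrite leeNy_eq.
have [q0 Qq0] : exists q, Q q.
  case: (pselect (exists q, Q q)) => // hn; exfalso; apply: hu => q Qq.
  by exfalso; apply: hn; exists q.
have := le_trans (Xge0 q0 Qq0) XK.
case hK : (maxe U X) => [k| |]; last 2 first.
- by move=> _; rewrite gt0_mulye ?lte_fin // leey.
- by rewrite leeNy_eq.
rewrite lee_fin => k0; rewrite -EFinM lee_fin.
rewrite hK in UK XK.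
apply: (@main R I mI finI Q L sigma k s0 k0 hQ hsub hbd) => //.
- move=> g hg hug; have [g0|gn] := eqVneq (L2norm I g) 0.
    by rewrite g0 mulr0 zero.
  have gpos : 0 < L2norm I g by rewrite lt_def gn L2norm_ge0.
  have := le_trans (Uub g hg hug gn) UK.
  by rewrite lee_fin ler_pdivrMr.
- move=> q Qq.
  have h : ((2 / sigma * cmod (L (cexpi q)))%:E <= k%:E)%E.
    rewrite EFinM; apply: le_trans XK; rewrite /X; apply: lee_wpmul2l.
      by rewrite lee_fin divr_ge0 // ltW.
    exact: Qub.
  rewrite lee_fin in h.
  have h2 : 0 <= sigma / 2 by rewrite divr_ge0 // ltW.
  have := ler_wpM2l h2 h.
  have -> : sigma / 2 * (2 / sigma * cmod (L (cexpi q))) = cmod (L (cexpi q)).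
    by field; rewrite gt_eqF.
  by rewrite mulrC mulrA.
Qed.
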